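(* Let $n$ be a non-negative integer and let $r,s\in\mathbb{C}\setminus\mathbb{Z}$ with $s\neq0$ and $r-s\notin\mathbb{Z}$. Then \[ \begin{aligned} \sum_{k=0}^{n}(-1)^{k}\binom{n}{k}\frac{H_s-H_{k+r-s}}{\binom{k+r}{s}}H_k &=H_n\left(\frac{r+1}{(r-s+1)^2}\frac{1}{\binom{n+r}{r-s+1}}+\frac{s}{r-s+1}\frac{H_{n+s-1}-H_{r-s+1}}{\binom{n+r}{r-s+1}}\right)+H_n\frac{H_{r-s}-H_s}{\binom{r}{s}}\\ &\quad+\sum_{k=0}^{n-1}H_{n-1-k}\frac{s(k+s)(H_{k+s}-H_{r-s+1})+k}{(k+s)^2\binom{r+k+1}{r-s+1}}. \end{aligned} \]
   Context: For complex $z$ not a negative integer, $H_z=\psi(z+1)+\gamma$ ($\psi$ the digamma function, $\gamma$ Euler's constant); for integers $n\ge 0$, $H_n=\sum_{j=1}^n 1/j$. Binomial coefficients with complex entries: $\binom{x}{y}=\frac{\Gamma(x+1)}{\Gamma(y+1)\Gamma(x-y+1)}$. *)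

(* Defs.v *)
From Stdlib Require Import Reals Factorial ClassicalEpsilon.
From Coquelicot Require Import Coquelicot.

Open Scope C_scope.

Fixpoint csum (f : nat -> C) (n : nat) : C :=
  match n with
  | O => 0
  | S m => csum f m + f m
  end.

Definition clim_to (u : nat -> C) (l : C) : Prop :=
  filterlim u eventually (locally l).

(* The limit of a complex sequence (arbitrary value if it does not converge). *)
Definition clim (u : nat -> C) : C :=
  epsilon (inhabits (RtoC 0)) (fun l => clim_to u l).

(* Power x^z for real x > 0 and complex z: exp(z ln x). *)
Definition cpow_pos (x : R) (z : C) : C :=
  (exp (Re z * ln x) * cos (Im z * ln x), exp (Re z * ln x) * sin (Im z * ln x))%R.

Fixpoint rising (z : C) (m : nat) : C :=
  match m with
  | O => z
  | S p => rising z p * (z + RtoC (INR (S p)))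
  end.

(* Euler--Gauss definition of the Gamma function:
   Gamma z = lim_{m->oo} m! m^z / (z (z+1) ... (z+m)). *)
Definition Gamma (z : C) : C :=
  clim (fun m => RtoC (INR (Factorial.fact m)) * cpow_pos (INR m) z / rising z m).

Fixpoint Hnat (n : nat) : C :=
  match n with
  | O => 0
  | S m => Hnat m + / RtoC (INR (S m))
  end.

(* Harmonic numbers of complex argument:
   H_z = psi(z+1) + gamma = sum_{k>=1} (1/k - 1/(k+z)). *)
Definition Hc (z : C) : C :=
  clim (fun N => csum (fun k => / RtoC (INR (S k)) - / (RtoC (INR (S k)) + z)) N).

Definition cbinom (x y : C) : C :=
  Gamma (x + 1) / (Gamma (y + 1) * Gamma (x - y + 1)).

Definition not_int (z : C) : Prop := forall m : Z, z <> RtoC (IZR m).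

(* Main.v *)
Require Import Defs.
From Stdlib Require Import Reals.
From Coquelicot Require Import Coquelicot.
From Stdlib Require Import ZArith Lia Lra ClassicalEpsilon.
Open Scope C_scope.

Lemma clim_to_iff (u : nat -> C) (l : C) :
  clim_to u l <-> (forall eps : R, (0 < eps)%R -> exists N, forall n, (N <= n)%nat -> (Cmod (u n - l) < eps)%R).
Proof.
  unfold clim_to; split.
  - intros H eps Heps.
    assert (Hf := @norm_factor_gt_0 C_AbsRing C_NormedModule).
    assert (Hp : (0 < eps / norm_factor (V:=C_NormedModule))%R).
    { apply Rdiv_lt_0_compat; lra. }
    destruct (proj1 (filterlim_locally u l) H (mkposreal _ Hp)) as [N HN].
    exists N; intros n Hn.
    specialize (HN n Hn).
    apply (@norm_compat2 C_AbsRing C_NormedModule) in HN. simpl in HN.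
    change (Cmod (u n - l) < eps)%R with (norm (minus (u n) l) < eps)%R.
    replace eps with (norm_factor (V:=C_NormedModule) * (eps / norm_factor (V:=C_NormedModule)))%R.
    exact HN. field. lra.
  - intros H. apply (proj2 (filterlim_locally u l)).
    intros eps. destruct (H eps (cond_pos eps)) as [N HN].
    exists N; intros n Hn. apply (@norm_compat1 C_AbsRing C_NormedModule). exact (HN n Hn).
Qed.

Lemma clim_spec (u : nat -> C) (l : C) : clim_to u l -> clim u = l.
Proof.
  intros H. unfold clim.
  assert (H2 : clim_to u (epsilon (inhabits (RtoC 0)) (fun l => clim_to u l))).
  { apply epsilon_spec. exists l; exact H. }
  exact (filterlim_locally_unique u _ _ H2 H).
Qed.

Lemma clim_to_ext (u v : nat -> C) (l : C) :
  (exists M, forall n, (M <= n)%nat -> u n = v n) -> clim_to u l -> clim_to v l.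
Proof.
  intros [M HM] H. rewrite clim_to_iff in *. intros eps He.
  destruct (H eps He) as [N HN]. exists (max N M). intros n Hn.
  rewrite <- HM by lia. apply HN; lia.
Qed.

Lemma clim_to_shift (u : nat -> C) (l : C) (M : nat) :
  clim_to (fun n => u (n + M)%nat) l -> clim_to u l.
Proof.
  rewrite !clim_to_iff. intros H eps He.
  destruct (H eps He) as [N HN]. exists (N + M)%nat. intros n Hn.
  replace n with ((n - M) + M)%nat by lia. apply HN; lia.
Qed.

Lemma clim_to_plus (u v : nat -> C) (a b : C) :
  clim_to u a -> clim_to v b -> clim_to (fun n => u n + v n) (a + b).
Proof.
  intros Hu Hv. unfold clim_to in *.
  apply (filterlim_comp_2 u v (fun x y => plus x y) Hu Hv (filterlim_plus a b)).
Qed.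

Lemma clim_to_mult (u v : nat -> C) (a b : C) :
  clim_to u a -> clim_to v b -> clim_to (fun n => u n * v n) (a * b).
Proof.
  rewrite !clim_to_iff. intros Hu Hv eps He.
  pose proof (Cmod_ge_0 a) as Ha. pose proof (Cmod_ge_0 b) as Hb.
  set (e1 := (Rmin 1 (eps / (2 * (Cmod b + 1))))%R).
  set (e2 := (eps / (2 * (Cmod a + 2)))%R).
  assert (He1 : (0 < e1)%R).
  { unfold e1. apply Rmin_pos. lra. apply Rdiv_lt_0_compat; lra. }
  assert (He2 : (0 < e2)%R) by (unfold e2; apply Rdiv_lt_0_compat; lra).
  destruct (Hu e1 He1) as [N1 H1]. destruct (Hv e2 He2) as [N2 H2].
  exists (max N1 N2). intros n Hn.
  specialize (H1 n ltac:(lia)). specialize (H2 n ltac:(lia)).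
  replace (u n * v n - a * b) with ((u n - a) * b + u n * (v n - b)) by ring.
  eapply Rle_lt_trans. apply Cmod_triangle. rewrite !Cmod_mult.
  assert (Hun : (Cmod (u n) <= Cmod a + 1)%R).
  { pose proof (Cmod_triangle (u n - a) a). replace (u n - a + a) with (u n) in H by ring.
    assert (e1 <= 1)%R by (unfold e1; apply Rmin_l). lra. }
  assert (Hx : (Cmod (u n - a) * Cmod b <= eps / (2 * (Cmod b + 1)) * (Cmod b + 1))%R).
  { apply Rmult_le_compat. apply Cmod_ge_0. lra.
    assert (e1 <= eps / (2 * (Cmod b + 1)))%R by (unfold e1; apply Rmin_r). lra. lra. }
  assert (Hy : (Cmod (u n) * Cmod (v n - b) <= (Cmod a + 2) * e2)%R).
  { apply Rmult_le_compat. apply Cmod_ge_0. apply Cmod_ge_0. lra. lra. }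
  assert (Hz : (Cmod (u n) * Cmod (v n - b) < (Cmod a + 2) * e2 \/ Cmod (u n) * Cmod (v n - b) = (Cmod a + 2) * e2)%R) by lra.
  assert (E1 : (eps / (2 * (Cmod b + 1)) * (Cmod b + 1) = eps / 2)%R) by (field; lra).
  assert (E2 : ((Cmod a + 2) * e2 = eps / 2)%R) by (unfold e2; field; lra).
  assert (Hs : (Cmod (u n) * Cmod (v n - b) < eps / 2)%R).
  { apply (Rle_lt_trans _ ((Cmod a + 1) * Cmod (v n - b))).
    apply Rmult_le_compat_r. apply Cmod_ge_0. lra.
    apply (Rle_lt_trans _ ((Cmod a + 1) * e2)). apply Rmult_le_compat_l; lra.
    unfold e2. apply (Rmult_lt_reg_r (2 * (Cmod a + 2))). lra.
    field_simplify; try lra. }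
  lra.
Qed.

Lemma clim_to_const (a : C) : clim_to (fun _ => a) a.
Proof.
  rewrite clim_to_iff. intros eps He. exists O. intros n _.
  replace (a - a) with (RtoC 0) by ring. rewrite Cmod_0. exact He.
Qed.

Lemma clim_to_inv_lin (c : C) : clim_to (fun n => / (RtoC (INR n) + c)) 0.
Proof.
  rewrite clim_to_iff. intros eps He.
  destruct (archimed (Cmod c + / eps)) as [Hup _].
  set (N := Z.to_nat (up (Cmod c + / eps))).
  assert (HN : (Cmod c + / eps < INR N)%R).
  { unfold N. rewrite INR_IZR_INZ. rewrite Z2Nat.id. lra.
    apply le_IZR. assert (0 < / eps)%R by (apply Rinv_0_lt_compat; lra).
    pose proof (Cmod_ge_0 c). lra. }
  exists N. intros n Hn.
  assert (HnN : (INR N <= INR n)%R) by (apply le_INR; lia).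
  assert (Hinv : (0 < / eps)%R) by (apply Rinv_0_lt_compat; lra).
  assert (Hlow : (INR n - Cmod c <= Cmod (RtoC (INR n) + c))%R).
  { pose proof (Cmod_triangle (RtoC (INR n) + c) (- c)).
    replace (RtoC (INR n) + c + - c) with (RtoC (INR n)) in H by ring.
    rewrite Cmod_R in H. rewrite Cmod_opp in H.
    rewrite Rabs_right in H. lra. apply Rle_ge, pos_INR. }
  assert (Hpos : (0 < Cmod (RtoC (INR n) + c))%R) by lra.
  assert (Hnz : RtoC (INR n) + c <> 0).
  { intro E. rewrite E, Cmod_0 in Hpos. lra. }
  replace (/ (RtoC (INR n) + c) - 0) with (/ (RtoC (INR n) + c)) by ring.
  rewrite Cmod_inv by exact Hnz.
  apply (Rmult_lt_reg_l (Cmod (RtoC (INR n) + c))). lra.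
  rewrite Rinv_r by lra.
  apply (Rmult_lt_reg_r (/ eps)). exact Hinv.
  rewrite Rmult_assoc, Rinv_r by lra. rewrite Rmult_1_l, Rmult_1_r. lra.
Qed.

Lemma Cmod_lower (x : R) (z : C) : (0 <= x)%R -> (x - Cmod z <= Cmod (RtoC x + z))%R.
Proof.
  intros Hx. pose proof (Cmod_triangle (RtoC x + z) (- z)).
  replace (RtoC x + z + - z) with (RtoC x) in H by ring.
  rewrite Cmod_R, Cmod_opp, Rabs_right in H by lra. lra.
Qed.

Lemma exists_nat_gt (x : R) : exists N : nat, (x < INR N)%R.
Proof.
  destruct (archimed (Rmax x 0)) as [Hup _].
  exists (Z.to_nat (up (Rmax x 0))). rewrite INR_IZR_INZ, Z2Nat.id.
  pose proof (Rmax_l x 0). lra.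
  apply le_IZR. pose proof (Rmax_r x 0). lra.
Qed.

Lemma csum_sum_n (f : nat -> C) (n : nat) : csum f (S n) = sum_n f n.
Proof.
  induction n.
  - simpl. rewrite sum_O. change (0 + f O = f O). ring.
  - change (csum f (S n) + f (S n) = sum_n f (S n)). rewrite IHn.
    unfold sum_n. rewrite sum_n_Sm by lia. reflexivity.
Qed.

Lemma csum_split (f : nat -> C) (M n : nat) :
  csum f (M + n) = csum f M + csum (fun k => f (M + k)%nat) n.
Proof.
  induction n.
  - rewrite Nat.add_0_r. simpl. ring.
  - rewrite Nat.add_succ_r. simpl. rewrite IHn. ring.
Qed.

Lemma ex_series_tele (c : R) (M : nat) :
  ex_series (fun k => (c * (/ INR (k + S M) - / INR (S (k + S M))))%R).
Proof.
  exists (c * / INR (S M))%R.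
  unfold is_series.
  assert (Hs : forall n, sum_n (fun k => (c * (/ INR (k + S M) - / INR (S (k + S M))))%R) n
              = (c * / INR (S M) - c * / INR (S (S n + M)))%R).
  { induction n.
    - rewrite sum_O. cbv beta. replace (0 + S M)%nat with (S M) by lia. replace (S (S 0 + M))%nat with (S (S M)) by lia. apply Rmult_minus_distr_l.
    - unfold sum_n in *. rewrite sum_n_Sm by lia. rewrite IHn.
      replace (S n + S M)%nat with (S (S n + M)) by lia.
      replace (S (S (S n) + M)) with (S (S (S n + M))) by lia.
      match goal with |- ?L = ?Q => change (@eq R L Q) end.
      change (plus ?a ?b) with (a + b)%R. ring. }
  apply (filterlim_ext (fun n => (c * / INR (S M) - c * / INR (S (S n + M)))%R)).
  { intros n. symmetry. apply Hs. }
  change (is_lim_seq (fun n => (c * / INR (S M) - c * / INR (S (S n + M)))%R) (c * / INR (S M))%R).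
  assert (H1 : is_lim_seq (fun n => / INR (n + S (S M)))%R 0%R).
  { assert (H2 := proj1 (is_lim_seq_incr_n INR (S (S M)) p_infty) is_lim_seq_INR).
    pose proof (is_lim_seq_inv _ _ H2) as H3. simpl in H3. apply H3. discriminate. }
  assert (H0 : is_lim_seq (fun n => c * / INR (S (S n + M)))%R (c * 0)%R).
  { assert (H5 : is_lim_seq (fun n => / INR (S (S n + M)))%R 0%R).
    { apply (is_lim_seq_ext (fun n => / INR (n + S (S M)))%R). intros n. do 2 f_equal. lia. exact H1. }
    pose proof (is_lim_seq_scal_l _ c 0%R H5) as H6. simpl in H6. exact H6. }
  pose proof (is_lim_seq_minus' _ _ _ _ (is_lim_seq_const (c * / INR (S M))%R) H0) as H4.
  rewrite Rmult_0_r, Rminus_0_r in H4. exact H4.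
Qed.


Lemma hterm_bound (x : R) (z : C) : (2 * Cmod z < x)%R -> (2 <= x)%R ->
  (Cmod (/ RtoC x - / (RtoC x + z)) <= 2 * Cmod z * (/ (x - 1) - / x))%R.
Proof.
  intros H1 H2.
  pose proof (Cmod_lower x z ltac:(lra)) as Hd.
  pose proof (Cmod_ge_0 z) as Hz.
  assert (Hdpos : (0 < Cmod (RtoC x + z))%R) by lra.
  assert (Hdnz : RtoC x + z <> 0) by (intro E; rewrite E, Cmod_0 in Hdpos; lra).
  assert (Hxnz : RtoC x <> 0) by (intro E; apply RtoC_inj in E; lra).
  replace (/ RtoC x - / (RtoC x + z)) with (z * / (RtoC x * (RtoC x + z))) by (field; auto).
  rewrite Cmod_mult, Cmod_inv, Cmod_mult, Cmod_R, Rabs_right by (try lra; apply Cmult_neq_0; auto).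
  assert (Ha : (/ (x * Cmod (RtoC x + z)) <= 2 * / (x * x))%R).
  { replace (2 * / (x * x))%R with (/ (x * (x / 2)))%R by (field; lra).
    apply Rinv_le_contravar. apply Rmult_lt_0_compat; lra.
    apply Rmult_le_compat_l; lra. }
  assert (Hb : (/ (x * x) <= / (x - 1) - / x)%R).
  { replace (/ (x - 1) - / x)%R with (/ (x * (x - 1)))%R by (field; lra).
    apply Rinv_le_contravar. apply Rmult_lt_0_compat; lra.
    apply Rmult_le_compat_l; lra. }
  apply (Rle_trans _ (Cmod z * (2 * / (x * x)))).
  apply Rmult_le_compat_l; lra.
  replace (2 * Cmod z * (/ (x - 1) - / x))%R with (Cmod z * (2 * (/ (x - 1) - / x)))%R by ring.
  apply Rmult_le_compat_l; lra.
Qed.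

Definition hterm (z : C) (k : nat) : C := / RtoC (INR (S k)) - / (RtoC (INR (S k)) + z).

Lemma Hc_conv (z : C) : exists l, clim_to (fun N => csum (hterm z) N) l.
Proof.
  destruct (exists_nat_gt (2 * Cmod z)) as [M HM].
  set (a := fun k => hterm z (S M + k)).
  assert (Hex : ex_series a).
  { apply (ex_series_le a (fun k => (2 * Cmod z * (/ INR (k + S M) - / INR (S (k + S M))))%R)).
    - intros k. change (norm (a k)) with (Cmod (a k)). unfold a, hterm.
      assert (E : INR (k + S M) = (INR (S (S M + k)) - 1)%R).
      { rewrite S_INR. replace (S M + k)%nat with (k + S M)%nat by lia. ring. }
      rewrite E. replace (S (k + S M)) with (S (S M + k)) by lia.
      apply hterm_bound.
      + rewrite S_INR, plus_INR, S_INR. pose proof (pos_INR k). lra.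
      + rewrite S_INR, plus_INR, S_INR. pose proof (pos_INR k). pose proof (pos_INR M). lra.
    - apply ex_series_tele. }
  destruct Hex as [l Hl].
  exists (csum (hterm z) (S M) + l).
  apply (clim_to_shift _ _ (S (S M))).
  apply (clim_to_ext (fun n => csum (hterm z) (S M) + sum_n a n)).
  { exists O. intros n _. replace (n + S (S M))%nat with (S M + S n)%nat by lia.
    rewrite csum_split, <- (csum_sum_n a n). reflexivity. }
  apply clim_to_plus. apply clim_to_const. exact Hl.
Qed.

Lemma Hc_eq (z : C) (l : C) : clim_to (fun N => csum (hterm z) N) l -> Hc z = l.
Proof. intros H. unfold Hc. apply clim_spec. exact H. Qed.

Lemma Hc_lim (z : C) : clim_to (fun N => csum (hterm z) N) (Hc z).
Proof.
  destruct (Hc_conv z) as [l Hl]. rewrite (Hc_eq z l Hl). exact Hl.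
Qed.

Lemma Hc_succ (z : C) : Hc (z + 1) = Hc z + / (z + 1).
Proof.
  apply Hc_eq.
  assert (Hs : forall N, csum (hterm (z + 1)) N = csum (hterm z) N + / (z + 1) + (- / (RtoC (INR N) + (z + 1)))).
  { induction N.
    - simpl. replace (RtoC 0 + (z + 1)) with (z + 1) by ring. ring.
    - simpl csum. rewrite IHN.
      assert (E : RtoC (INR N) + (z + 1) = RtoC (INR (S N)) + z) by (rewrite S_INR, RtoC_plus; ring).
      rewrite E. unfold hterm. ring. }
  apply (clim_to_ext (fun N => csum (hterm z) N + / (z + 1) + (- / (RtoC (INR N) + (z + 1))))).
  { exists O. intros n _. symmetry. apply Hs. }
  replace (Hc z + / (z + 1)) with (Hc z + / (z + 1) + - (0)) by ring.
  apply clim_to_plus. apply clim_to_plus. apply Hc_lim. apply clim_to_const.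
  apply (clim_to_ext (fun N => (- (1)) * / (RtoC (INR N) + (z + 1)))).
  { exists O. intros n _. ring. }
  replace (- (0)) with ((- (1)) * 0) by ring.
  apply clim_to_mult. apply clim_to_const. apply clim_to_inv_lin.
Qed.

Lemma sin_near (a : R) : (0 <= a <= 1)%R -> (a - a^3 <= sin a <= a)%R.
Proof.
  intros Ha. pose proof (pre_sin_bound a 0 ltac:(lra) ltac:(lra)) as H.
  unfold sin_approx, sin_term in H. simpl in H.
  unfold Rdiv in H. simpl in H.
  replace (1 + 1 + 1 + 1 + 1 + 1)%R with 6%R in H by ring.
  match type of H with context [Rinv ?x] => match x with (_ + 1)%R => replace x with 120%R in H by ring end end.
  assert (h3 : (0 <= a*a*a)%R) by (apply Rmult_le_pos; [apply Rmult_le_pos|]; lra).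
  assert (h5 : (a*a*a*a*a <= a*a*a)%R) by (assert (a*a <= 1)%R by nra; nra).
  simpl. split; lra.
Qed.

Lemma sin_near_abs (b : R) : (Rabs b <= 1)%R -> (Rabs (sin b - b) <= b^2 /\ Rabs (sin b) <= Rabs b)%R.
Proof.
  intros Hb. destruct (Rle_dec 0 b) as [H|H].
  - pose proof (sin_near b ltac:(split; [lra| rewrite Rabs_right in Hb; lra])).
    rewrite Rabs_right in Hb by lra.
    assert (b^3 <= b^2)%R by (simpl; nra).
    assert (0 <= sin b)%R by (simpl in *; nra).
    split. rewrite Rabs_left1 by lra. lra.
    rewrite !Rabs_right by lra. lra.
  - rewrite Rabs_left in Hb by lra.
    pose proof (sin_near (- b) ltac:(lra)). rewrite sin_neg in H0.
    assert ((-b)^3 <= b^2)%R by (simpl; nra).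
    assert (0 <= - sin b)%R by (simpl in *; nra).
    split. rewrite Rabs_right by lra. lra.
    rewrite !Rabs_left1 by lra. lra.
Qed.

Lemma cos_near (b : R) : (Rabs b <= 1)%R -> (Rabs (cos b - 1) <= b^2)%R.
Proof.
  intros Hb.
  replace b with (2 * (b/2))%R at 1 by field. rewrite cos_2a_sin.
  destruct (sin_near_abs (b/2) ltac:(rewrite Rabs_div, (Rabs_right 2) by lra; lra)) as [_ H].
  rewrite Rabs_div, (Rabs_right 2) in H by lra.
  assert (Hs : (sin (b/2) * sin (b/2) <= b^2 / 4)%R).
  { assert (Rabs (sin (b/2)) * Rabs (sin (b/2)) <= (Rabs b / 2) * (Rabs b / 2))%R.
    { apply Rmult_le_compat; try apply Rabs_pos; lra. }
    rewrite <- Rabs_mult in H0. rewrite Rabs_right in H0 by (apply Rle_ge, Rle_0_sqr).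
    replace (Rabs b / 2 * (Rabs b / 2))%R with (Rabs b * Rabs b / 4)%R in H0 by field.
    rewrite <- Rabs_mult, Rabs_right in H0 by (apply Rle_ge, Rle_0_sqr). simpl. lra. }
  assert (0 <= sin (b/2) * sin (b/2))%R by apply Rle_0_sqr.
  rewrite Rabs_left1 by lra. lra.
Qed.

Lemma exp_near (t : R) : (Rabs t <= 1/2)%R -> (0 <= exp t - 1 - t <= 2 * t^2)%R.
Proof.
  intros Ht. pose proof (exp_ineq1_le t). pose proof (exp_ineq1_le (- t)).
  assert (Hl : (1 - t > 0)%R) by (apply Rabs_le_between in Ht; lra).
  assert (Hu : (exp t <= / (1 - t))%R).
  { replace (exp t) with (/ exp (- t))%R by (rewrite exp_Ropp, Rinv_inv; reflexivity).
    apply Rinv_le_contravar; lra. }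
  split. lra.
  assert (/ (1 - t) - 1 - t = t^2 / (1 - t))%R by (field; lra).
  assert (t^2 / (1 - t) <= 2 * t^2)%R.
  { apply Rabs_le_between in Ht.
    unfold Rdiv. replace (2 * t^2)%R with (t^2 * 2)%R by ring.
    apply Rmult_le_compat_l. simpl; nra.
    replace 2%R with (/ (1/2))%R by field. apply Rinv_le_contravar; lra. }
  lra.
Qed.

Definition cexp (w : C) : C := ((exp (Re w) * cos (Im w))%R, (exp (Re w) * sin (Im w))%R).

Lemma Cmod_le_sum (v : C) : (Cmod v <= 2 * (Rabs (Re v) + Rabs (Im v)))%R.
Proof.
  eapply Rle_trans. apply Cmod_2Rmax.
  assert (sqrt 2 <= 2)%R.
  { rewrite <- (sqrt_square 2) at 2 by lra. apply sqrt_le_1_alt. lra. }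
  assert (Rmax (Rabs (fst v)) (Rabs (snd v)) <= Rabs (Re v) + Rabs (Im v))%R.
  { apply Rmax_lub; unfold Re, Im; pose proof (Rabs_pos (fst v)); pose proof (Rabs_pos (snd v)); lra. }
  apply Rmult_le_compat; try lra. apply sqrt_pos.
  eapply Rle_trans. apply (Rabs_pos (fst v)). apply Rmax_l.
Qed.

Lemma Re_le_Cmod (v : C) : (Rabs (Re v) <= Cmod v)%R.
Proof. eapply Rle_trans. apply Rmax_l. apply Rmax_Cmod. Qed.
Lemma Im_le_Cmod (v : C) : (Rabs (Im v) <= Cmod v)%R.
Proof. eapply Rle_trans. apply Rmax_r. apply Rmax_Cmod. Qed.

Lemma cexp_bound (w : C) : (Cmod w <= 1/2)%R -> (Cmod (cexp w - 1 - w) <= 32 * Cmod w ^ 2)%R.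
Proof.
  intros Hw.
  pose proof (Re_le_Cmod w) as Ha. pose proof (Im_le_Cmod w) as Hb.
  destruct w as [a b]. unfold Re, Im in Ha, Hb. simpl in Ha, Hb.
  set (m := Cmod (a, b)) in *.
  eapply Rle_trans. apply Cmod_le_sum.
  unfold cexp, Re, Im. simpl.
  replace (exp a * cos b - 1 - a)%R with (exp a * (cos b - 1) + (exp a - 1 - a))%R by ring.
  replace (exp a * sin b - 0 - b)%R with (exp a * (sin b - b) + (exp a - 1) * b)%R by ring.
  pose proof (exp_near a ltac:(lra)) as Hea.
  assert (Hea2 : (exp a <= 2)%R).
  { assert (a^2 <= 1/4)%R. { simpl. rewrite Rmult_1_r.
      assert (Rabs a * Rabs a <= 1/2 * (1/2))%R by (apply Rmult_le_compat; try apply Rabs_pos; lra).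
      rewrite <- Rabs_mult, Rabs_right in H by (apply Rle_ge, Rle_0_sqr). lra. }
    apply Rabs_le_between in Ha. lra. }
  assert (Hexp0 : (0 < exp a)%R) by apply exp_pos.
  pose proof (cos_near b ltac:(lra)) as Hc.
  destruct (sin_near_abs b ltac:(lra)) as [Hs _].
  assert (Ha2 : (a^2 <= m^2)%R).
  { simpl. rewrite !Rmult_1_r. rewrite <- (Rabs_right (a*a)) by (apply Rle_ge, Rle_0_sqr).
    rewrite Rabs_mult. apply Rmult_le_compat; try apply Rabs_pos; lra. }
  assert (Hb2 : (b^2 <= m^2)%R).
  { simpl. rewrite !Rmult_1_r. rewrite <- (Rabs_right (b*b)) by (apply Rle_ge, Rle_0_sqr).
    rewrite Rabs_mult. apply Rmult_le_compat; try apply Rabs_pos; lra. }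
  assert (Hab : (Rabs a * Rabs b <= m^2)%R).
  { simpl. rewrite Rmult_1_r. apply Rmult_le_compat; try apply Rabs_pos; lra. }
  assert (H1 : (Rabs (exp a * (cos b - 1) + (exp a - 1 - a)) <= 2 * m^2 + 2 * m^2)%R).
  { eapply Rle_trans. apply Rabs_triang. rewrite Rabs_mult, (Rabs_right (exp a)) by lra.
    rewrite (Rabs_right (exp a - 1 - a)) by lra.
    assert (exp a * Rabs (cos b - 1) <= 2 * b^2)%R.
    { apply Rmult_le_compat; try lra. apply Rabs_pos. }
    lra. }
  assert (H2 : (Rabs (exp a * (sin b - b) + (exp a - 1) * b) <= 2 * m^2 + 4 * m^2)%R).
  { eapply Rle_trans. apply Rabs_triang. rewrite !Rabs_mult, (Rabs_right (exp a)) by lra.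
    assert (exp a * Rabs (sin b - b) <= 2 * b^2)%R.
    { apply Rmult_le_compat; try lra. apply Rabs_pos. }
    assert (Rabs (exp a - 1) <= 2 * Rabs a + 2 * a^2)%R.
    { apply Rabs_le_between in Ha. 
      destruct (Rle_dec 0 (exp a - 1)); [rewrite Rabs_right by lra | rewrite Rabs_left by lra];
      destruct (Rle_dec 0 a); [rewrite (Rabs_right a) by lra | rewrite (Rabs_left a) by lra| rewrite (Rabs_right a) by lra | rewrite (Rabs_left a) by lra]; lra. }
    assert (Rabs (exp a - 1) * Rabs b <= (2 * Rabs a + 2 * a^2) * Rabs b)%R.
    { apply Rmult_le_compat_r. apply Rabs_pos. lra. }
    assert (a^2 * Rabs b <= m^2)%R.
    { assert (a^2 * Rabs b <= m^2 * 1)%R.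
      { apply Rmult_le_compat. simpl; nra. apply Rabs_pos. exact Ha2. lra. }
      lra. }
    lra. }
  replace (exp a * cos b + - (1) + - a)%R with (exp a * (cos b - 1) + (exp a - 1 - a))%R by ring.
  replace (exp a * sin b + - 0 + - b)%R with (exp a * (sin b - b) + (exp a - 1) * b)%R by ring.
  simpl in H1, H2. lra.
Qed.

Lemma cexp_add (u v : C) : cexp (u + v) = cexp u * cexp v.
Proof.
  destruct u as [u1 u2], v as [v1 v2]. unfold cexp, Re, Im, Cplus, Cmult. simpl.
  rewrite exp_plus, cos_plus, sin_plus. f_equal; ring.
Qed.

Lemma cpow_cexp (x : R) (z : C) : cpow_pos x z = cexp (z * RtoC (ln x)).
Proof.
  destruct z as [a b]. unfold cpow_pos, cexp, Re, Im, Cmult, RtoC. simpl.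
  f_equal; f_equal; try f_equal; ring.
Qed.

Lemma prod_conv (p e : nat -> C) (K : R) (M : nat) : (0 <= K)%R ->
  (forall m, (S M <= m)%nat -> p (S m) = p m * (1 + e m)) ->
  (forall m, (S M <= m)%nat -> (Cmod (e m) <= K * (/ INR m - / INR (S m)))%R) ->
  exists l, clim_to p l.
Proof.
  intros HK Hrec Hb.
  assert (Hpos : forall n, (0 < INR (n + S M)%nat)%R) by (intros; apply lt_0_INR; lia).
  assert (Hbnd : forall n, (Cmod (p (n + S M)%nat) <= Cmod (p (S M)) * exp (K * (/ INR (S M) - / INR (n + S M)%nat)))%R).
  { induction n.
    - simpl. rewrite Rminus_eq_0, Rmult_0_r, exp_0. lra.
    - replace (S n + S M)%nat with (S (n + S M)%nat) by lia.
      rewrite Hrec by lia. rewrite Cmod_mult.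
      assert (H1 : (Cmod (1 + e (n + S M)%nat) <= exp (K * (/ INR (n + S M)%nat - / INR (S (n + S M)%nat))))%R).
      { eapply Rle_trans. apply Cmod_triangle. rewrite Cmod_1.
        eapply Rle_trans. 2: apply exp_ineq1_le. specialize (Hb (n + S M)%nat ltac:(lia)). lra. }
      eapply Rle_trans. apply Rmult_le_compat. apply Cmod_ge_0. apply Cmod_ge_0. exact IHn. exact H1.
      rewrite Rmult_assoc, <- exp_plus. apply Rmult_le_compat_l. apply Cmod_ge_0.
      replace (K * (/ INR (S M) - / INR (n + S M)%nat) + K * (/ INR (n + S M)%nat - / INR (S (n + S M)%nat)))%R
        with (K * (/ INR (S M) - / INR (S (n + S M)%nat)))%R by ring. apply Rle_refl. }
  set (Bd := (Cmod (p (S M)) * exp (K * / INR (S M)))%R).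
  assert (Hbd : forall n, (Cmod (p (n + S M)%nat) <= Bd)%R).
  { intros n. eapply Rle_trans. apply Hbnd. unfold Bd. apply Rmult_le_compat_l. apply Cmod_ge_0.
    destruct (Req_dec (K * (/ INR (S M) - / INR (n + S M)%nat)) (K * / INR (S M))) as [E|E].
    rewrite E; apply Rle_refl.
    apply Rlt_le, exp_increasing.
    assert (0 < / INR (n + S M)%nat)%R by (apply Rinv_0_lt_compat, Hpos).
    assert (K * / INR (n + S M)%nat >= 0)%R by nra. nra. }
  set (d := fun n => p (S (n + S M)%nat) - p (n + S M)%nat).
  assert (Hd : ex_series d).
  { apply (ex_series_le d (fun k => (Bd * K * (/ INR (k + S M) - / INR (S (k + S M))))%R)).
    - intros k. change (norm (d k)) with (Cmod (d k)). unfold d.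
      rewrite Hrec by lia.
      replace (p (k + S M)%nat * (1 + e (k + S M)%nat) - p (k + S M)%nat) with (p (k + S M)%nat * e (k + S M)%nat) by ring.
      rewrite Cmod_mult. rewrite Rmult_assoc. apply Rmult_le_compat. apply Cmod_ge_0. apply Cmod_ge_0.
      apply Hbd. apply Hb. lia.
    - apply ex_series_tele. }
  destruct Hd as [l Hl].
  exists (p (S M) + l).
  apply (clim_to_shift _ _ (S (S M))).
  apply (clim_to_ext (fun n => p (S M) + sum_n d n)).
  { exists O. intros n _. rewrite <- csum_sum_n.
    assert (forall n, p (n + S M)%nat = p (S M) + csum d n).
    { induction n0. simpl. ring. simpl csum. rewrite Cplus_assoc, <- IHn0. unfold d.
      replace (S n0 + S M)%nat with (S (n0 + S M)) by lia. ring. }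
    replace (n + S (S M))%nat with (S n + S M)%nat by lia. rewrite H. reflexivity. }
  apply clim_to_plus. apply clim_to_const. exact Hl.
Qed.

Lemma Cinv_zero : / (RtoC 0) = 0.
Proof.
  unfold Cinv, RtoC. simpl. idtac.
  unfold Rdiv. f_equal; ring.
Qed.

Lemma Cinv_mult_total (a b : C) : / (a * b) = / a * / b.
Proof.
  destruct (Ceq_dec a 0) as [Ha|Ha].
  - subst. rewrite Cmult_0_l. change (/ RtoC 0 = / RtoC 0 * / b). rewrite Cinv_zero. ring.
  - destruct (Ceq_dec b 0) as [Hb|Hb].
    + subst. rewrite Cmult_0_r. change (/ RtoC 0 = / a * / RtoC 0). rewrite Cinv_zero. ring.
    + field. split; auto.
Qed.

Lemma ratio_bound (z : C) (x L : R) : (1 <= x)%R -> (/ (x + 1) <= L <= / x)%R -> (2 * Cmod z + 1 <= x)%R ->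
  (Cmod (RtoC (x + 1) * cexp (z * RtoC L) / (z + RtoC (x + 1)) - 1)
     <= (128 * Cmod z ^ 2 + 2 * Cmod z) * (/ x - / (x + 1)))%R.
Proof.
  intros Hx HL Hz.
  set (A := Cmod z). assert (HA : (0 <= A)%R) by apply Cmod_ge_0. assert (HzA : (2 * A + 1 <= x)%R) by exact Hz. clear Hz.
  assert (HL0 : (0 < L)%R). { assert (0 < / (x+1))%R by (apply Rinv_0_lt_compat; lra). lra. }
  set (w := z * RtoC L).
  assert (Hw : Cmod w = (A * L)%R) by (unfold w; rewrite Cmod_mult, Cmod_R, Rabs_right by lra; reflexivity).
  assert (HLx : (x * L <= 1)%R).
  { destruct HL as [_ H]. apply (Rmult_le_compat_l x) in H; [|lra]. rewrite Rinv_r in H by lra. exact H. }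
  assert (HLx2 : (1 <= (x + 1) * L)%R).
  { destruct HL as [H _]. apply (Rmult_le_compat_l (x+1)) in H; [|lra]. rewrite Rinv_r in H by lra. exact H. }
  assert (HLx3 : ((x + 1) * L - 1 <= / x)%R).
  { destruct HL as [_ H]. assert ((x+1) * L <= (x+1) * / x)%R by (apply Rmult_le_compat_l; lra).
    replace ((x + 1) * / x)%R with (1 + / x)%R in H0 by (field; lra). lra. }
  assert (HAL : (A * L <= A / x)%R) by (unfold Rdiv; apply Rmult_le_compat_l; lra).
  assert (Hw2 : (Cmod w <= 1/2)%R).
  { rewrite Hw. eapply Rle_trans. exact HAL. apply (Rmult_le_reg_r x). lra.
    replace (A / x * x)%R with A by (field; lra). lra. }
  set (d := z + RtoC (x + 1)).
  assert (Hd : ((x + 1) / 2 <= Cmod d)%R).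
  { unfold d. rewrite Cplus_comm. pose proof (Cmod_lower (x+1) z ltac:(lra)). fold A in H. lra. }
  assert (Hdnz : d <> 0). { intro E. rewrite E, Cmod_0 in Hd. lra. }
  set (N := RtoC (x + 1) * (cexp w - 1 - w) + z * RtoC ((x + 1) * L - 1)).
  assert (HE : RtoC (x + 1) * cexp w / d - 1 = N / d).
  { unfold N, w, d. rewrite RtoC_minus, RtoC_mult. field. exact Hdnz. }
  fold w. rewrite HE.
  assert (HN : (Cmod N <= (x + 1) * (32 * (A / x) ^ 2) + A * / x)%R).
  { unfold N. eapply Rle_trans. apply Cmod_triangle. rewrite !Cmod_mult, !Cmod_R.
    rewrite (Rabs_right (x+1)) by lra. rewrite (Rabs_right ((x + 1) * L - 1)) by lra.
    apply Rplus_le_compat.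
    - apply Rmult_le_compat_l. lra. eapply Rle_trans. apply cexp_bound. exact Hw2.
      apply Rmult_le_compat_l. lra. rewrite Hw. apply pow_incr. split. apply Rmult_le_pos; lra. exact HAL.
    - apply Rmult_le_compat_l; lra. }
  unfold Cdiv. rewrite Cmod_mult, Cmod_inv by exact Hdnz.
  assert (Hid : (/ Cmod d <= 2 / (x + 1))%R).
  { replace (2 / (x + 1))%R with (/ ((x + 1) / 2))%R by (field; lra).
    apply Rinv_le_contravar; lra. }
  eapply Rle_trans. apply Rmult_le_compat. apply Cmod_ge_0.
  apply Rlt_le, Rinv_0_lt_compat. lra. exact HN. exact Hid.
  replace (/ x - / (x + 1))%R with (/ (x * (x + 1)))%R by (field; lra).
  assert (Hx0 : (0 < x)%R) by lra.
  replace (((x + 1) * (32 * (A / x) ^ 2) + A * / x) * (2 / (x + 1)))%R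
     with (64 * A ^ 2 / (x * x) + 2 * A / (x * (x + 1)))%R by (field; lra).
  assert (H64 : (64 * A ^ 2 / (x * x) <= 128 * A ^ 2 / (x * (x + 1)))%R).
  { assert (Hp : (0 <= 64 * A ^ 2 * (x - 1) / (x * x * (x + 1)))%R).
    { unfold Rdiv. apply Rmult_le_pos. apply Rmult_le_pos. apply Rmult_le_pos. lra. apply pow2_ge_0. lra.
      left. apply Rinv_0_lt_compat. apply Rmult_lt_0_compat. apply Rmult_lt_0_compat; lra. lra. }
    assert (Heq : (128 * A ^ 2 / (x * (x + 1)) - 64 * A ^ 2 / (x * x) = 64 * A ^ 2 * (x - 1) / (x * x * (x + 1)))%R) by (field; lra).
    lra. }
  replace ((128 * A ^ 2 + 2 * A) * / (x * (x + 1)))%R with (128 * A ^ 2 / (x * (x + 1)) + 2 * A / (x * (x + 1)))%R by (field; lra).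
  lra.
Qed.

Lemma ln_diff_bounds (x : R) : (1 <= x)%R -> (/ (x + 1) <= ln (x + 1) - ln x <= / x)%R.
Proof.
  intros Hx. set (L := (ln (x + 1) - ln x)%R).
  assert (HE : exp L = ((x + 1) / x)%R).
  { unfold L. unfold Rminus. rewrite exp_plus, exp_Ropp, !exp_ln by lra. reflexivity. }
  pose proof (exp_ineq1_le L). pose proof (exp_ineq1_le (- L)).
  rewrite exp_Ropp, HE in H0. rewrite HE in H.
  replace (/ ((x + 1) / x))%R with (x / (x + 1))%R in H0 by (field; lra).
  split.
  - replace (/ (x + 1))%R with (1 - x / (x + 1))%R by (field; lra). lra.
  - replace (/ x)%R with ((x + 1) / x - 1)%R by (field; lra). lra.
Qed.

Definition gseq (z : C) (m : nat) : C := RtoC (INR (fact m)) * cpow_pos (INR m) z / rising z m.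

Lemma gseq_rec (z : C) (m : nat) :
  gseq z (S m) = gseq z m * (RtoC (INR (S m)) * cexp (z * RtoC (ln (INR (S m)) - ln (INR m))) / (z + RtoC (INR (S m)))).
Proof.
  unfold gseq. rewrite !cpow_cexp.
  replace (z * RtoC (ln (INR (S m)))) with (z * RtoC (ln (INR m)) + z * RtoC (ln (INR (S m)) - ln (INR m)))
    by (rewrite RtoC_minus; ring).
  rewrite cexp_add. change (rising z (S m)) with (rising z m * (z + RtoC (INR (S m)))). change (fact (S m)) with (S m * fact m)%nat.
  rewrite mult_INR, RtoC_mult. unfold Cdiv. rewrite Cinv_mult_total. ring.
Qed.

Lemma gseq_conv (z : C) : exists l, clim_to (gseq z) l.
Proof.
  destruct (exists_nat_gt (2 * Cmod z + 1)) as [M HM].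
  apply (prod_conv (gseq z)
    (fun m => RtoC (INR (S m)) * cexp (z * RtoC (ln (INR (S m)) - ln (INR m))) / (z + RtoC (INR (S m))) - 1)
    (128 * Cmod z ^ 2 + 2 * Cmod z) M).
  - pose proof (Cmod_ge_0 z). pose proof (pow2_ge_0 (Cmod z)). lra.
  - intros m Hm. rewrite gseq_rec. f_equal. ring.
  - intros m Hm. rewrite S_INR.
    assert (Hx : (INR M <= INR m)%R) by (apply le_INR; lia).
    assert (Hx1 : (1 <= INR m)%R) by (apply (le_INR 1); lia).
    apply ratio_bound. exact Hx1. apply ln_diff_bounds. exact Hx1. lra.
Qed.

Lemma Gamma_gseq (z : C) : Gamma z = clim (gseq z).
Proof. reflexivity. Qed.

Lemma Gamma_lim (z : C) : clim_to (gseq z) (Gamma z).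
Proof.
  destruct (gseq_conv z) as [l Hl]. rewrite Gamma_gseq, (clim_spec _ _ Hl). exact Hl.
Qed.

Lemma rising_shift (z : C) (m : nat) : rising z (S m) = z * rising (z + 1) m.
Proof.
  induction m.
  - change (z * (z + RtoC (INR 1)) = z * (z + 1)). simpl INR. reflexivity.
  - change (rising z (S m) * (z + RtoC (INR (S (S m)))) = z * (rising (z + 1) m * (z + 1 + RtoC (INR (S m))))).
    rewrite IHm. rewrite (S_INR (S m)), RtoC_plus. ring.
Qed.

Lemma cexp_RtoC (l : R) : cexp (RtoC l) = RtoC (exp l).
Proof. unfold cexp, RtoC, Re, Im. simpl. rewrite cos_0, sin_0. f_equal; ring. Qed.

Lemma Gamma_succ (z : C) : z <> 0 -> Gamma (z + 1) = z * Gamma z.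
Proof.
  intros Hz. rewrite (Gamma_gseq (z + 1)). apply clim_spec.
  destruct (exists_nat_gt (Cmod z)) as [M HM].
  apply (clim_to_ext (fun m => gseq z m * (z * (1 + (- (z + 1)) * / (RtoC (INR m) + (z + 1)))))).
  { exists (S M). intros m Hm.
    assert (Hm0 : (0 < INR m)%R) by (apply lt_0_INR; lia).
    unfold gseq. rewrite !cpow_cexp.
    replace ((z + 1) * RtoC (ln (INR m))) with (z * RtoC (ln (INR m)) + RtoC (ln (INR m))) by ring.
    rewrite cexp_add, cexp_RtoC, exp_ln by exact Hm0.
    assert (Hr : / rising (z + 1) m = z * (/ rising z m * / (z + RtoC (INR (S m))))).
    { rewrite <- Cinv_mult_total. change (rising z m * (z + RtoC (INR (S m)))) with (rising z (S m)).
      rewrite rising_shift, Cinv_mult_total, Cmult_assoc, Cinv_r by exact Hz. ring. }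
    unfold Cdiv. rewrite Hr.
    assert (Hd : RtoC (INR m) + (z + 1) = z + RtoC (INR (S m))) by (rewrite S_INR, RtoC_plus; ring).
    rewrite Hd.
    assert (Hdz : z + RtoC (INR (S m)) <> 0).
    { assert (HMm : (INR M <= INR (S m))%R) by (apply le_INR; lia).
      pose proof (Cmod_lower (INR (S m)) z (pos_INR _)). rewrite Cplus_comm.
      intro E. rewrite E, Cmod_0 in H. lra. }
    replace (1 + - (z + 1) * / (z + RtoC (INR (S m)))) with (RtoC (INR m) * / (z + RtoC (INR (S m)))).
    ring. rewrite S_INR, RtoC_plus. field. rewrite S_INR, RtoC_plus in Hdz. exact Hdz. }
  rewrite (Cmult_comm z (Gamma z)).
  apply clim_to_mult. apply Gamma_lim.
  assert (H : clim_to (fun m => z * (1 + (- (z + 1)) * / (RtoC (INR m) + (z + 1)))) (z * (1 + (- (z + 1)) * 0))).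
  { apply clim_to_mult. apply clim_to_const. apply clim_to_plus. apply clim_to_const.
    apply clim_to_mult. apply clim_to_const. apply clim_to_inv_lin. }
  replace (z * (1 + (- (z + 1)) * 0)) with z in H by ring. exact H.
Qed.

Lemma csum_ext (f g : nat -> C) (n : nat) : (forall k, (k < n)%nat -> f k = g k) -> csum f n = csum g n.
Proof.
  induction n; intros H. reflexivity.
  simpl. rewrite IHn by (intros; apply H; lia). rewrite H by lia. reflexivity.
Qed.

Lemma csum_first (f : nat -> C) (n : nat) : csum f (S n) = f O + csum (fun k => f (S k)) n.
Proof.
  induction n. simpl. ring.
  change (csum f (S n) + f (S n) = f O + (csum (fun k => f (S k)) n + f (S n))).
  rewrite IHn. ring.
Qed.

Lemma csum_lin (f g : nat -> C) (a b : C) (n : nat) :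
  csum (fun k => a * f k + b * g k) n = a * csum f n + b * csum g n.
Proof. induction n. simpl. ring. simpl. rewrite IHn. ring. Qed.

Lemma csum_scal (f : nat -> C) (a : C) (n : nat) : csum (fun k => a * f k) n = a * csum f n.
Proof. induction n. simpl. ring. simpl. rewrite IHn. ring. Qed.

Lemma csum_zero_tail (f : nat -> C) (m N : nat) : (m <= N)%nat ->
  (forall k, (m <= k < N)%nat -> f k = 0) -> csum f N = csum f m.
Proof.
  intros Hm H. induction N.
  - assert (m = 0%nat) by lia. subst. reflexivity.
  - destruct (Nat.eq_dec m (S N)). subst. reflexivity.
    simpl. rewrite IHN by (try lia; intros; apply H; lia). rewrite H by lia. ring.
Qed.

Lemma csum_swap (g : nat -> nat -> C) (n m : nat) :
  csum (fun j => csum (fun k => g j k) m) n = csum (fun k => csum (fun j => g j k) n) m.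
Proof.
  induction n. simpl. induction m. reflexivity. simpl. rewrite <- IHm. ring.
  simpl. rewrite IHn. clear IHn. induction m. simpl. ring. simpl. rewrite <- IHm. ring.
Qed.

Fixpoint cb (n k : nat) : C :=
  match n, k with
  | _, O => 1
  | O, S _ => 0
  | S n', S k' => cb n' k' + cb n' (S k')
  end.

Lemma cb_zero (n k : nat) : (n < k)%nat -> cb n k = 0.
Proof.
  revert k. induction n; intros k Hk; destruct k; try lia. reflexivity.
  simpl. rewrite !IHn by lia. ring.
Qed.

Lemma cb_n0 (n : nat) : cb n 0 = 1.
Proof. destruct n; reflexivity. Qed.

Lemma cb_1 (n : nat) : cb n 1 = RtoC (INR n).
Proof.
  induction n. reflexivity.
  change (cb n 0 + cb n 1 = RtoC (INR (S n))). rewrite IHn, cb_n0, S_INR, RtoC_plus. ring.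
Qed.

Lemma cb_absorb (n k : nat) : RtoC (INR (S k)) * cb (S n) (S k) = RtoC (INR (S n)) * cb n k.
Proof.
  revert k. induction n; intros k.
  - destruct k. simpl. ring. change (RtoC (INR (S (S k))) * (cb 0 (S k) + cb 0 (S (S k))) = RtoC (INR 1) * cb 0 (S k)).
    simpl cb. ring.
  - destruct k.
    + change (RtoC (INR 1) * (cb (S n) 0 + cb (S n) 1) = RtoC (INR (S (S n))) * cb (S n) 0).
      rewrite cb_n0, cb_1. rewrite (S_INR (S n)), RtoC_plus. simpl INR. ring.
    + change (RtoC (INR (S (S k))) * (cb (S n) (S k) + cb (S n) (S (S k))) = RtoC (INR (S (S n))) * (cb n k + cb n (S k))).
      assert (E1 := IHn k). assert (E2 := IHn (S k)).
      rewrite (S_INR (S k)), RtoC_plus in *. rewrite (S_INR (S n)), RtoC_plus.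
      change (cb (S n) (S k)) with (cb n k + cb n (S k)) in *.
      transitivity (cb n k + cb n (S k) + RtoC (INR (S k)) * (cb n k + cb n (S k)) + (RtoC (INR (S k)) + 1) * cb (S n) (S (S k))).
      ring. rewrite E1, E2. rewrite S_INR, RtoC_plus. ring.
Qed.

Lemma csum_plus (f g : nat -> C) (n : nat) : csum (fun k => f k + g k) n = csum f n + csum g n.
Proof. induction n. simpl. ring. simpl. rewrite IHn. ring. Qed.

Lemma csum_S (f : nat -> C) (n : nat) : csum f (S n) = csum f n + f n.
Proof. reflexivity. Qed.

Lemma Hnat_S (m : nat) : Hnat (S m) = Hnat m + / RtoC (INR (S m)).
Proof. reflexivity. Qed.

Lemma Hnat_csum (n : nat) : csum (fun j => / RtoC (INR (S j))) n = Hnat n.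
Proof. induction n. reflexivity. rewrite csum_S, IHn. reflexivity. Qed.

Lemma INR_S_nz (n : nat) : RtoC (INR (S n)) <> 0.
Proof. intro E. apply RtoC_inj in E. pose proof (lt_0_INR (S n) ltac:(lia)). lra. Qed.

Lemma Eid (n k : nat) : csum (fun j => cb (n - 1 - j) k / RtoC (INR (S j))) n = cb n k * (Hnat n - Hnat k).
Proof.
  revert k. induction n; intros k.
  - destruct k; simpl; ring.
  - destruct k.
    + rewrite cb_n0. unfold Cdiv. rewrite (csum_ext _ (fun j => / RtoC (INR (S j)))).
      rewrite Hnat_csum. simpl Hnat. ring. intros; rewrite cb_n0; ring.
    + rewrite csum_S. replace (S n - 1 - n)%nat with 0%nat by lia.
      change (cb 0 (S k)) with (RtoC 0).
      rewrite (csum_ext _ (fun j => cb (n - 1 - j) k / RtoC (INR (S j)) + cb (n - 1 - j) (S k) / RtoC (INR (S j)))).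
      2:{ intros j Hj. replace (S n - 1 - j)%nat with (S (n - 1 - j)) by lia. simpl cb. field. apply INR_S_nz. }
      rewrite csum_plus, !IHn.
      pose proof (cb_absorb n k) as Hab.
      change (cb (S n) (S k)) with (cb n k + cb n (S k)) in *.
      rewrite !Hnat_S.
      pose proof (INR_S_nz n). pose proof (INR_S_nz k).
      assert (Z : cb n k / RtoC (INR (S k)) - (cb n k + cb n (S k)) / RtoC (INR (S n)) = 0).
      { replace (cb n k / RtoC (INR (S k)) - (cb n k + cb n (S k)) / RtoC (INR (S n)))
          with ((RtoC (INR (S n)) * cb n k - RtoC (INR (S k)) * (cb n k + cb n (S k))) / (RtoC (INR (S k)) * RtoC (INR (S n))))
          by (field; auto).
        rewrite Hab. unfold Cdiv. ring. }
      match goal with |- ?L = ?Q => transitivity (Q + (cb n k / RtoC (INR (S k)) - (cb n k + cb n (S k)) / RtoC (INR (S n)))) end.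
      field. split; auto. rewrite Z. ring.
Qed.

Definition sg (k : nat) : C := RtoC ((-1) ^ k)%R.

Lemma sg_S (k : nat) : sg (S k) = - sg k.
Proof. unfold sg. simpl pow. unfold RtoC, Copp. f_equal; simpl; ring. Qed.

Definition bt (n : nat) (f : nat -> C) : C := csum (fun k => sg k * cb n k * f k) (S n).

Lemma bt_ext_tail (m N : nat) (f : nat -> C) : (m <= N)%nat ->
  bt m f = csum (fun k => sg k * cb m k * f k) (S N).
Proof.
  intros H. unfold bt. symmetry. apply csum_zero_tail. lia.
  intros k Hk. rewrite cb_zero by lia. ring.
Qed.

Lemma harm_transform (n : nat) (f : nat -> C) :
  csum (fun k => sg k * cb n k * f k * Hnat k) (S n)
  = Hnat n * bt n f - csum (fun j => bt (n - 1 - j) f / RtoC (INR (S j))) n.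
Proof.
  rewrite (csum_ext (fun j => bt (n - 1 - j) f / RtoC (INR (S j)))
     (fun j => csum (fun k => sg k * f k * (cb (n - 1 - j) k / RtoC (INR (S j)))) (S n))).
  2:{ intros j Hj. rewrite (bt_ext_tail (n - 1 - j) n) by lia.
      unfold Cdiv. rewrite Cmult_comm, <- csum_scal. apply csum_ext. intros; ring. }
  rewrite csum_swap.
  rewrite (csum_ext (fun k => csum (fun j => sg k * f k * (cb (n - 1 - j) k / RtoC (INR (S j)))) n)
     (fun k => sg k * f k * (cb n k * (Hnat n - Hnat k)))).
  2:{ intros k Hk. rewrite csum_scal, Eid. reflexivity. }
  unfold bt. rewrite <- csum_scal.
  replace (csum (fun k => Hnat n * (sg k * cb n k * f k)) (S n) - csum (fun k => sg k * f k * (cb n k * (Hnat n - Hnat k))) (S n))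
   with (csum (fun k => 1 * (Hnat n * (sg k * cb n k * f k)) + (-1) * (sg k * f k * (cb n k * (Hnat n - Hnat k)))) (S n))
   by (rewrite csum_lin; ring).
  apply csum_ext. intros; ring.
Qed.

Lemma abel (V : nat -> C) (n : nat) :
  csum (fun j => V (n - 1 - j)%nat / RtoC (INR (S j))) n
  = Hnat n * V O - csum (fun k => Hnat (n - 1 - k) * (V k - V (S k))) n.
Proof.
  revert V. induction n; intros V.
  - simpl. ring.
  - rewrite csum_S. replace (S n - 1 - n)%nat with O by lia.
    rewrite (csum_ext (fun j => V (S n - 1 - j)%nat / RtoC (INR (S j))) (fun j => V (S (n - 1 - j))%nat / RtoC (INR (S j)))).
    2:{ intros j Hj. do 2 f_equal. lia. }
    rewrite (IHn (fun k => V (S k))).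
    rewrite csum_first. replace (S n - 1 - 0)%nat with n by lia.
    rewrite (csum_ext (fun k => Hnat (S n - 1 - S k) * (V (S k) - V (S (S k)))) (fun k => Hnat (n - 1 - k) * (V (S k) - V (S (S k))))).
    2:{ intros k Hk. do 2 f_equal. lia. }
    rewrite Hnat_S. unfold Cdiv. ring.
Qed.

Fixpoint poch (z : C) (k : nat) : C :=
  match k with O => 1 | S k' => poch z k' * (z + RtoC (INR k')) end.

Lemma poch_S (z : C) (k : nat) : poch z (S k) = poch z k * (z + RtoC (INR k)).
Proof. reflexivity. Qed.

Lemma poch_shift (z : C) (k : nat) : poch z (S k) = z * poch (z + 1) k.
Proof.
  induction k.
  - simpl. ring.
  - rewrite poch_S, IHk, poch_S. rewrite S_INR, RtoC_plus. ring.
Qed.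

Lemma poch_nz (z : C) (k : nat) : (forall j, z + RtoC (INR j) <> 0) -> poch z k <> 0.
Proof.
  intros H. induction k. simpl. intro E. apply RtoC_inj in E. lra.
  rewrite poch_S. apply Cmult_neq_0; auto.
Qed.

Definition hsm (z : C) (k : nat) : C := csum (fun j => / (z + RtoC (INR j))) k.

Lemma hsm_S (z : C) (k : nat) : hsm z (S k) = hsm z k + / (z + RtoC (INR k)).
Proof. reflexivity. Qed.

Lemma hsm_shift (z : C) (k : nat) : hsm z (S k) = / z + hsm (z + 1) k.
Proof.
  unfold hsm. rewrite csum_first. f_equal. simpl. f_equal. ring.
  apply csum_ext. intros j _. f_equal. rewrite S_INR, RtoC_plus. ring.
Qed.

Lemma bt_ext (n : nat) (u v : nat -> C) : (forall k, u k = v k) -> bt n u = bt n v.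
Proof. intros H. unfold bt. apply csum_ext. intros. rewrite H. reflexivity. Qed.

Lemma bt_lin (n : nat) (u v : nat -> C) (a b : C) :
  bt n (fun k => a * u k + b * v k) = a * bt n u + b * bt n v.
Proof.
  unfold bt. rewrite <- csum_lin. apply csum_ext. intros. ring.
Qed.

Lemma bt_scal (n : nat) (u : nat -> C) (a : C) : bt n (fun k => a * u k) = a * bt n u.
Proof. unfold bt. rewrite <- csum_scal. apply csum_ext. intros. ring. Qed.

Lemma bt_pascal (n : nat) (u : nat -> C) : bt (S n) u = bt n u - bt n (fun k => u (S k)).
Proof.
  unfold bt. rewrite (csum_first (fun k => sg k * cb (S n) k * u k) (S n)).
  rewrite (csum_first (fun k => sg k * cb n k * u k) n).
    rewrite (csum_ext (fun k => sg (S k) * cb (S n) (S k) * u (S k))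
             (fun k => (-1) * (sg k * cb n k * u (S k)) + (-1) * (sg k * cb n (S k) * u (S k)))).
  2:{ intros k _. rewrite sg_S. simpl cb. ring. }
  rewrite csum_lin.
  rewrite (csum_S (fun k => sg k * cb n (S k) * u (S k)) n).
  rewrite (cb_zero n (S n)) by lia.
  rewrite (csum_ext (fun k => sg (S k) * cb n (S k) * u (S k)) (fun k => (-1) * (sg k * cb n (S k) * u (S k)))).
  2:{ intros k _. rewrite sg_S. ring. }
  rewrite csum_scal. unfold sg. simpl. rewrite !cb_n0. ring.
Qed.

Lemma ratio_S (x y : C) (k : nat) :
  poch x (S k) / poch y (S k) = x / y * (poch (x + 1) k / poch (y + 1) k).
Proof. rewrite !poch_shift. unfold Cdiv. rewrite !Cinv_mult_total. ring. Qed.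

Lemma CV (n : nat) : forall x y : C, (forall j, y + RtoC (INR j) <> 0) ->
  bt n (fun k => poch x k / poch y k) = poch (y - x) n / poch y n.
Proof.
  induction n; intros x y Hy.
  - unfold bt. rewrite csum_S. cbn [csum poch cb]. unfold sg. simpl pow. unfold Cdiv. ring.
  - rewrite bt_pascal.
    rewrite (bt_ext n (fun k => poch x (S k) / poch y (S k)) (fun k => x / y * (poch (x + 1) k / poch (y + 1) k))) by (intros; apply ratio_S).
    assert (Hy1 : forall j, y + 1 + RtoC (INR j) <> 0).
    { intros j. replace (y + 1 + RtoC (INR j)) with (y + RtoC (INR (S j))) by (rewrite S_INR, RtoC_plus; ring). apply Hy. }
    rewrite bt_scal, (IHn x y Hy), (IHn (x + 1) (y + 1) Hy1).
    replace (y + 1 - (x + 1)) with (y - x) by ring.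
    assert (Hy0 : y <> 0) by (pose proof (Hy O) as H; simpl in H; replace (y + 0) with y in H by ring; exact H).
    assert (Hyn : y + RtoC (INR n) <> 0) by apply Hy.
    assert (HY : poch y n <> 0) by (apply poch_nz; exact Hy).
    assert (HA : poch (y + 1) n = poch y n * (y + RtoC (INR n)) / y).
    { rewrite <- poch_S, poch_shift. field. exact Hy0. }
    rewrite HA, !poch_S. field. repeat split; auto.
Qed.

Lemma CVH (n : nat) : forall x y : C, (forall j, y + RtoC (INR j) <> 0) -> (forall j, x + RtoC (INR j) <> 0) ->
  (forall j, y - x + RtoC (INR j) <> 0) ->
  bt n (fun k => poch x k / poch y k * hsm x k) = - (poch (y - x) n / poch y n) * hsm (y - x) n.
Proof.
  induction n; intros x y Hy Hx Hs.
  - unfold bt. rewrite csum_S. cbn [csum poch cb]. unfold sg, hsm. simpl pow. cbn [csum]. unfold Cdiv. ring.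
  - rewrite bt_pascal.
    assert (Hx0 : x <> 0) by (pose proof (Hx O) as H; simpl in H; replace (x + 0) with x in H by ring; exact H).
    assert (Hy0 : y <> 0) by (pose proof (Hy O) as H; simpl in H; replace (y + 0) with y in H by ring; exact H).
    assert (Hy1 : forall j, y + 1 + RtoC (INR j) <> 0).
    { intros j. replace (y + 1 + RtoC (INR j)) with (y + RtoC (INR (S j))) by (rewrite S_INR, RtoC_plus; ring). apply Hy. }
    rewrite (bt_ext n (fun k => poch x (S k) / poch y (S k) * hsm x (S k))
      (fun k => / y * (poch (x + 1) k / poch (y + 1) k) + x / y * (poch (x + 1) k / poch (y + 1) k * hsm (x + 1) k))).
    2:{ intros k. rewrite ratio_S, hsm_shift. field. repeat split; auto. apply poch_nz; auto. }
    assert (Hx1 : forall j, x + 1 + RtoC (INR j) <> 0).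
    { intros j. replace (x + 1 + RtoC (INR j)) with (x + RtoC (INR (S j))) by (rewrite S_INR, RtoC_plus; ring). apply Hx. }
    assert (Hs1 : forall j, y + 1 - (x + 1) + RtoC (INR j) <> 0).
    { intros j. replace (y + 1 - (x + 1)) with (y - x) by ring. apply Hs. }
    rewrite bt_lin, (IHn x y Hy Hx Hs), (IHn (x + 1) (y + 1) Hy1 Hx1 Hs1), (CV n (x + 1) (y + 1) Hy1).
    replace (y + 1 - (x + 1)) with (y - x) by ring.
    assert (Hyn : y + RtoC (INR n) <> 0) by apply Hy.
    assert (Hsn : y - x + RtoC (INR n) <> 0) by apply Hs.
    assert (HY : poch y n <> 0) by (apply poch_nz; exact Hy).
    assert (HA : poch (y + 1) n = poch y n * (y + RtoC (INR n)) / y).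
    { rewrite <- poch_S, poch_shift. field. exact Hy0. }
    rewrite HA, hsm_S, !poch_S. field. repeat split; auto.
Qed.

Lemma core (n : nat) (x y s D : C) : y = x + s ->
  (forall j, y + RtoC (INR j) <> 0) -> (forall j, x + RtoC (INR j) <> 0) -> (forall j, s + RtoC (INR j) <> 0) ->
  csum (fun k => sg k * cb n k * ((D - hsm x k) * (poch x k / poch y k)) * Hnat k) (S n)
  = Hnat n * (poch s n / poch y n * (D + hsm s n)) - Hnat n * D
    + csum (fun k => Hnat (n - 1 - k) * (((D + hsm s k) * x - 1) * (poch s k / poch y k) / (y + RtoC (INR k)))) n.
Proof.
  intros Hxy Hy Hx Hs.
  set (V := fun m => poch s m / poch y m * (D + hsm s m)).
  assert (HV : forall m, bt m (fun k => (D - hsm x k) * (poch x k / poch y k)) = V m).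
  { intros m.
    rewrite (bt_ext m _ (fun k => D * (poch x k / poch y k) + (-1) * (poch x k / poch y k * hsm x k))) by (intros; ring).
    rewrite bt_lin, CV, CVH; auto.
    - replace (y - x) with s by (rewrite Hxy; ring). unfold V. ring.
    - intros j. replace (y - x) with s by (rewrite Hxy; ring). apply Hs. }
  rewrite harm_transform, HV.
  rewrite (csum_ext (fun j => bt (n - 1 - j) (fun k => (D - hsm x k) * (poch x k / poch y k)) / RtoC (INR (S j)))
                    (fun j => V (n - 1 - j)%nat / RtoC (INR (S j)))) by (intros; rewrite HV; reflexivity).
  rewrite abel.
  assert (HV0 : V O = D) by (unfold V, hsm; cbn [poch csum]; field).
  rewrite HV0.
  rewrite (csum_ext (fun k => Hnat (n - 1 - k) * (V k - V (S k)))
     (fun k => Hnat (n - 1 - k) * (((D + hsm s k) * x - 1) * (poch s k / poch y k) / (y + RtoC (INR k))))).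
  - unfold V. ring.
  - intros k _. f_equal. unfold V. rewrite hsm_S, !poch_S.
    assert (HY : poch y k <> 0) by (apply poch_nz; exact Hy).
    pose proof (Hy k). pose proof (Hs k).
    subst y. field. repeat split; auto.
Qed.

Lemma Cbin_n0 (n : nat) : Binomial.C n 0 = 1%R.
Proof. unfold Binomial.C. rewrite Nat.sub_0_r. simpl. field. apply INR_fact_neq_0. Qed.

Lemma Cbin_nn (n : nat) : Binomial.C n n = 1%R.
Proof. unfold Binomial.C. rewrite Nat.sub_diag. simpl. field. apply INR_fact_neq_0. Qed.

Lemma binom_cb (n k : nat) : (k <= n)%nat -> RtoC (Binomial.C n k) = cb n k.
Proof.
  revert k. induction n; intros k Hk.
  - assert (k = O) by lia. subst. rewrite Cbin_n0. reflexivity.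
  - destruct k. rewrite Cbin_n0, cb_n0. reflexivity.
    simpl cb. destruct (Nat.eq_dec k n).
    + subst. rewrite Cbin_nn, (cb_zero n (S n)) by lia. rewrite <- IHn by lia. rewrite Cbin_nn. ring.
    + rewrite <- pascal by lia. rewrite RtoC_plus, !IHn by lia. reflexivity.
Qed.

Lemma ni_nat (z : C) : not_int z -> forall j : nat, z + RtoC (INR j) <> 0.
Proof.
  intros H j E. apply (H (- Z.of_nat j)%Z).
  rewrite opp_IZR, <- INR_IZR_INZ, RtoC_opp.
  replace z with (z + RtoC (INR j) - RtoC (INR j)) by ring. rewrite E. ring.
Qed.

Lemma ni_plus1 (z : C) : not_int z -> not_int (z + 1).
Proof.
  intros H m E. apply (H (m - 1)%Z). rewrite minus_IZR, RtoC_minus, <- E. simpl. ring.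
Qed.

Lemma ni_nz (z : C) : not_int z -> z <> 0.
Proof. intros H E. apply (H 0%Z). rewrite E. reflexivity. Qed.

Lemma Gamma_poch (z : C) (k : nat) : (forall j, z + RtoC (INR j) <> 0) ->
  Gamma (z + RtoC (INR k)) = poch z k * Gamma z.
Proof.
  intros H. induction k.
  - simpl. replace (z + 0) with z by ring. ring.
  - replace (z + RtoC (INR (S k))) with (z + RtoC (INR k) + 1) by (rewrite S_INR, RtoC_plus; ring).
    rewrite Gamma_succ by apply H. rewrite IHk, poch_S. ring.
Qed.

Lemma Hc_shiftk (z : C) (k : nat) : Hc (z + RtoC (INR k)) = Hc z + hsm (z + 1) k.
Proof.
  induction k.
  - simpl. replace (z + 0) with z by ring. unfold hsm. simpl. ring.
  - replace (z + RtoC (INR (S k))) with (z + RtoC (INR k) + 1) by (rewrite S_INR, RtoC_plus; ring).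
    rewrite Hc_succ, IHk, hsm_S. replace (z + 1 + RtoC (INR k)) with (z + RtoC (INR k) + 1) by ring. ring.
Qed.

Lemma Cinv_inv_total (a : C) : / / a = a.
Proof.
  destruct (Ceq_dec a 0) as [H|H].
  - subst. change (/ / RtoC 0 = RtoC 0). rewrite !Cinv_zero. reflexivity.
  - field. auto.
Qed.

Theorem theorem15 (n : nat) (r s : C)
  (hr : not_int r) (hs : not_int s) (hs0 : s <> 0) (hrs : not_int (r - s)) :
  csum (fun k =>
      RtoC ((-1) ^ k * Binomial.C n k)%R
      * ((Hc s - Hc (RtoC (INR k) + r - s)) / cbinom (RtoC (INR k) + r) s)
      * Hnat k) (S n)
  =
  Hnat n *
    ((r + 1) / ((r - s + 1) * (r - s + 1)) * / cbinom (RtoC (INR n) + r) (r - s + 1)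
     + s / (r - s + 1) * ((Hc (RtoC (INR n) + s - 1) - Hc (r - s + 1))
                           / cbinom (RtoC (INR n) + r) (r - s + 1)))
  + Hnat n * ((Hc (r - s) - Hc s) / cbinom r s)
  + csum (fun k =>
      Hnat (n - 1 - k)
      * ((s * (RtoC (INR k) + s) * (Hc (RtoC (INR k) + s) - Hc (r - s + 1)) + RtoC (INR k))
         / ((RtoC (INR k) + s) * (RtoC (INR k) + s)
            * cbinom (r + RtoC (INR k) + 1) (r - s + 1)))) n.
Proof.
  pose proof (ni_nat _ (ni_plus1 _ hr)) as Hy.
  pose proof (ni_nat _ (ni_plus1 _ hrs)) as Hx.
  pose proof (ni_nat _ hs) as Hs.
  pose proof (ni_nat _ (ni_plus1 _ hs)) as Hs1.
  pose proof (ni_nz _ (ni_plus1 _ hrs)) as Hx0.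
  set (G1 := Gamma (r + 1)). set (G3 := Gamma (r - s + 1)). set (Gs := Gamma s).
  assert (HG2 : Gamma (s + 1) = s * Gs) by (apply Gamma_succ; exact hs0).
  assert (HGx : Gamma (r - s + 1 + 1) = (r - s + 1) * G3) by (apply Gamma_succ; exact Hx0).
  set (D := Hc s - Hc (r - s)).
  set (K := s * Gs * G3 * / G1).
  assert (GA : forall k, Gamma (RtoC (INR k) + r + 1) = poch (r + 1) k * G1).
  { intros k. replace (RtoC (INR k) + r + 1) with (r + 1 + RtoC (INR k)) by ring. apply Gamma_poch. exact Hy. }
  assert (GB : forall k, Gamma (RtoC (INR k) + r - s + 1) = poch (r - s + 1) k * G3).
  { intros k. replace (RtoC (INR k) + r - s + 1) with (r - s + 1 + RtoC (INR k)) by ring. apply Gamma_poch. exact Hx. }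
  assert (SA : csum (fun k =>
      RtoC ((-1) ^ k * Binomial.C n k)%R
      * ((Hc s - Hc (RtoC (INR k) + r - s)) / cbinom (RtoC (INR k) + r) s)
      * Hnat k) (S n) =
    K * csum (fun k => sg k * cb n k * ((D - hsm (r - s + 1) k) * (poch (r - s + 1) k / poch (r + 1) k)) * Hnat k) (S n)).
  { rewrite <- csum_scal. apply csum_ext. intros k Hk.
    rewrite RtoC_mult, binom_cb by lia. fold (sg k).
    replace (RtoC (INR k) + r - s) with (r - s + RtoC (INR k)) by ring. rewrite Hc_shiftk.
    unfold cbinom. rewrite GA, GB, HG2.
    unfold Cdiv. rewrite !Cinv_mult_total, !Cinv_inv_total. unfold K, D. ring. }
  rewrite SA.
  rewrite (core n (r - s + 1) (r + 1) s D) by (try ring; assumption).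
  assert (HcR : Hc (r - s + 1) = Hc (r - s) + / (r - s + 1)) by apply Hc_succ.
  assert (Hcs1 : Hc (s - 1) = Hc s - / s).
  { pose proof (Hc_succ (s - 1)) as H. replace (s - 1 + 1) with s in H by ring. rewrite H. ring. }
  assert (ST1 : Hnat n *
    ((r + 1) / ((r - s + 1) * (r - s + 1)) * / cbinom (RtoC (INR n) + r) (r - s + 1)
     + s / (r - s + 1) * ((Hc (RtoC (INR n) + s - 1) - Hc (r - s + 1))
                           / cbinom (RtoC (INR n) + r) (r - s + 1)))
     = K * (Hnat n * (poch s n / poch (r + 1) n * (D + hsm s n)))).
  { unfold cbinom. rewrite GA, HGx.
    replace (RtoC (INR n) + r - (r - s + 1) + 1) with (s + RtoC (INR n)) by ring.
    rewrite (Gamma_poch s n Hs). fold Gs.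
    replace (RtoC (INR n) + s - 1) with (s - 1 + RtoC (INR n)) by ring.
    rewrite Hc_shiftk. replace (s - 1 + 1) with s by ring. rewrite Hcs1, HcR.
    unfold Cdiv. rewrite !Cinv_mult_total, !Cinv_inv_total. unfold K, D.
    assert (HP : poch (r + 1) n <> 0) by (apply poch_nz; exact Hy).
    generalize (/ G1). intros iG. field. repeat split; auto. }
  assert (ST2 : Hnat n * ((Hc (r - s) - Hc s) / cbinom r s) = K * (- (Hnat n * D))).
  { unfold cbinom. replace (r - s + 1) with (r - s + 1) by ring. rewrite HG2. fold G1 G3.
    unfold Cdiv. rewrite !Cinv_mult_total, !Cinv_inv_total. unfold K, D. ring. }
  assert (ST3 : csum (fun k =>
      Hnat (n - 1 - k)
      * ((s * (RtoC (INR k) + s) * (Hc (RtoC (INR k) + s) - Hc (r - s + 1)) + RtoC (INR k))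
         / ((RtoC (INR k) + s) * (RtoC (INR k) + s)
            * cbinom (r + RtoC (INR k) + 1) (r - s + 1)))) n
     = K * csum (fun k => Hnat (n - 1 - k) * (((D + hsm s k) * (r - s + 1) - 1) * (poch s k / poch (r + 1) k) / (r + 1 + RtoC (INR k)))) n).
  { rewrite <- csum_scal. apply csum_ext. intros k _.
    unfold cbinom. rewrite HGx.
    replace (r + RtoC (INR k) + 1 + 1) with (r + 1 + RtoC (INR (S k))) by (rewrite S_INR, RtoC_plus; ring).
    rewrite (Gamma_poch (r + 1) (S k) Hy). fold G1.
    replace (r + RtoC (INR k) + 1 - (r - s + 1) + 1) with (s + 1 + RtoC (INR k)) by ring.
    rewrite (Gamma_poch (s + 1) k Hs1), HG2.
    replace (RtoC (INR k) + s) with (s + RtoC (INR k)) by ring.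
    rewrite Hc_shiftk, HcR.
    assert (Hp1 : poch (s + 1) k = poch s k * (s + RtoC (INR k)) / s).
    { rewrite <- poch_S, poch_shift. field. exact hs0. }
    assert (Hh1 : hsm (s + 1) k = hsm s k + / (s + RtoC (INR k)) - / s).
    { pose proof (hsm_shift s k) as H. rewrite hsm_S in H. rewrite H. ring. }
    rewrite Hp1, Hh1, poch_S.
    unfold Cdiv. rewrite !Cinv_mult_total, !Cinv_inv_total. unfold K, D.
    assert (HP : poch (r + 1) k <> 0) by (apply poch_nz; exact Hy).
    pose proof (Hs k). pose proof (Hy k).
    generalize (/ G1). intros iG. field. repeat split; auto. }
  rewrite ST1, ST2, ST3. ring.
Qed.
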